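(* Let $\frac12\le M<\frac23$. Algorithm C (defined in the context) has migration factor at most $M$, and on every input whose optimal offline makespan is $1$ it produces a schedule of makespan at most $2-M$. Hence its competitive ratio is at most $2-M$.
   Context: Model (two hierarchical machines with migration, bin stretching). Jobs $1,2,\dots,n$ arrive one by one ($n$ unknown in advance). Job $j$ has a size $p_j>0$ and a grade of service (GoS) $g_j\in\{1,2\}$; a job of GoS $1$ may only be processed on machine $m_1$, a job of GoS $2$ may be processed on $m_1$ or on $m_2$. The load of a machine is the total size of its jobs, the makespan is the maximum load. When job $j$ arrives, the algorithm must assign it, and may migrate previously arrived jobs (respecting GoS) of total size at most $M\cdot p_j$ (migration factor $M$). Bin stretching: the optimal offline makespan of the complete input is known in advance and scaled to $1$. The competitive ratio is the supremum over inputs of (algorithm's makespan)/(optimal makespan). Notation: $Y_{j}$ is the set of jobs on $m_2$ just after job $j$ has been handled, $y_j$ its total size, $y_0=0$; $p^{\max Y}_j$ is the largest size of a job in $Y_{j-1}$ ($0$ if empty); ''sorted $Y_{j-1}$'' lists $Y_{j-1}$ in non-increasing order of size; $w_j$ is the total size of the chosen set $W$. Algorithm C (parameter $M$). On arrival of job $j$: Step 2: if $g_j=1$ or $y_{j-1}\ge M$, assign $j$ to $m_1$. Step 3: else if $y_{j-1}+p_j\le 2-M$, assign $j$ to $m_2$. Step 4: else if $p^{\max Y}_j>M\cdot p_j$, assign $j$ to $m_1$. Step 5: otherwise let $W$ be the shortest prefix of sorted $Y_{j-1}$ with total size at least $p_j+y_{j-1}-(2-M)$ (or $W=Y_{j-1}$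 if none exists); migrate the jobs of $W$ to $m_1$ and assign $j$ to $m_2$. *)

(* Defs.v *)
From HB Require Import structures.
From mathcomp Require Import all_boot all_order all_algebra.
Set Implicit Arguments. Unset Strict Implicit. Unset Printing Implicit Defensive.
Import Order.TTheory GRing.Theory Num.Theory.
Local Open Scope ring_scope.

Section AlgC.
Variable R : realFieldType.

(* An input is a sequence of jobs (p_j, g_j); jobs are indexed 0,...,n-1
   (job index i here is job i+1 of the paper). *)
Definition job := (R * nat)%type.

Definition psz (I : seq job) (i : nat) : R := (nth (0, 1%N) I i).1.
Definition gos (I : seq job) (i : nat) : nat := (nth (0, 1%N) I i).2.

Definition totsz (I : seq job) (Y : seq nat) : R := \sum_(i <- Y) psz I i.

Definition pmaxY (I : seq job) (Y : seq nat) : R :=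
  foldr Num.max 0 [seq psz I i | i <- Y].

Definition sortY (I : seq job) (Y : seq nat) : seq nat :=
  sort (fun i k => psz I k <= psz I i) Y.

(* shortest prefix of s with total size at least t, or s itself if none *)
Definition shortest_prefix (I : seq job) (s : seq nat) (t : R) : seq nat :=
  take (find (fun k => t <= totsz I (take k s)) (iota 0 (size s).+1)) s.

(* One step of Algorithm C: handles job j given Y = Y_{j-1} (jobs on m2);
   returns (Y_j, set of migrated jobs). *)
Definition stepC (M : R) (I : seq job) (j : nat) (Y : seq nat)
  : seq nat * seq nat :=
  let p := psz I j in
  let y := totsz I Y in
  if (gos I j == 1%N) || (M <= y) then (Y, [::])             (* Step 2 *)
  else if y + p <= 2 - M then (j :: Y, [::])                 (* Step 3 *)
  else if M * p < pmaxY I Y then (Y, [::])                   (* Step 4 *)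
  else                                                       (* Step 5 *)
    let W := shortest_prefix I (sortY I Y) (p + y - (2 - M)) in
    (j :: [seq i <- Y | i \notin W], W).

Fixpoint Ystate (M : R) (I : seq job) (j : nat) : seq nat :=
  match j with
  | O => [::]
  | j'.+1 => (stepC M I j' (Ystate M I j')).1
  end.

Definition migrated (M : R) (I : seq job) (j : nat) : seq nat :=
  (stepC M I j (Ystate M I j)).2.

Definition loads_C (M : R) (I : seq job) : R * R :=
  let Y := Ystate M I (size I) in
  (totsz I [seq i <- iota 0 (size I) | i \notin Y], totsz I Y).

Definition makespan_C (M : R) (I : seq job) : R :=
  Num.max (loads_C M I).1 (loads_C M I).2.

(* Offline schedules: a i = true iff job i is on m2; GoS must be respected. *)
Definition valid_sched (I : seq job) (a : nat -> bool) : Prop :=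
  forall i, (i < size I)%N -> gos I i = 1%N -> a i = false.

Definition sched_makespan (I : seq job) (a : nat -> bool) : R :=
  Num.max (totsz I [seq i <- iota 0 (size I) | ~~ a i])
          (totsz I [seq i <- iota 0 (size I) | a i]).

Definition opt_makespan_is (I : seq job) (v : R) : Prop :=
  (exists a, valid_sched I a /\ sched_makespan I a = v) /\
  (forall a, valid_sched I a -> v <= sched_makespan I a).

Definition valid_input (I : seq job) : Prop :=
  all (fun jb => (0 < jb.1) && ((jb.2 == 1%N) || (jb.2 == 2%N))) I.

End AlgC.

(* Main.v *)
Require Import Defs.
From HB Require Import structures.
From mathcomp Require Import all_boot all_order all_algebra.
From mathcomp Require Import ring lra.
Import Order.TTheory GRing.Theory Num.Theory.
Local Open Scope ring_scope.
Set Implicit Arguments. Unset Strict Implicit.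

Section Aux.
Variable R : realFieldType.
Variable I : seq (job R).
Hypothesis Hpos : forall i, 0 <= psz I i.

Definition S (n : nat) (P : pred nat) : R := \sum_(i <- iota 0 n | P i) psz I i.

Lemma totsz_filter r (P : pred nat) :
  totsz I [seq i <- r | P i] = \sum_(i <- r | P i) psz I i.
Proof. by rewrite /totsz big_filter. Qed.

Lemma totsz_ge0 r : 0 <= totsz I r.
Proof. by apply: sumr_ge0. Qed.

Lemma S_mono n (P Q : pred nat) :
  (forall i, (i < n)%N -> Q i -> P i) -> S n Q <= S n P.
Proof.
move=> H; rewrite /S (big_mkcond Q) (big_mkcond P) /=.
rewrite big_seq [X in _ <= X]big_seq; apply: ler_sum => i.
rewrite mem_iota add0n => /andP[_ Hi].
case HQ: (Q i); first by rewrite (H _ Hi HQ).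
by case: (P i).
Qed.

Lemma S_disj n (P Q : pred nat) :
  (forall i, P i -> ~~ Q i) -> S n (fun i => P i || Q i) = S n P + S n Q.
Proof.
move=> H; rewrite /S (big_mkcond P) (big_mkcond Q) (big_mkcond (fun i => P i || Q i)) /=.
rewrite -big_split /=; apply: eq_bigr => i _.
case HP: (P i); last by rewrite add0r.
by rewrite (negbTE (H _ HP)) addr0.
Qed.

Lemma S_pred1 n j : (j < n)%N -> S n (fun i => i == j) = psz I j.
Proof.
move=> Hj; have := @big_nat1_eq R 0 +%R (psz I) j 0 n.
by rewrite /index_iota subn0 /S /= Hj.
Qed.

Lemma S_one n (P : pred nat) j : (j < n)%N -> P j -> psz I j <= S n P.
Proof.
move=> Hj HP; rewrite -(S_pred1 Hj); apply: S_mono => i _ /eqP->//.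
Qed.

Lemma S_two n (P : pred nat) j k : (j < n)%N -> (k < n)%N -> j != k -> P j -> P k ->
  psz I j + psz I k <= S n P.
Proof.
move=> Hj Hk Hjk HPj HPk; rewrite -(S_pred1 Hj) -(S_pred1 Hk) -S_disj.
  by apply: S_mono => i _ /orP[]/eqP->.
by move=> i /= /eqP->.
Qed.

End Aux.

Section Step.
Variable R : realFieldType.
Variable M : R.
Variable I : seq (job R).
Hypothesis HM1 : 1 / 2 <= M.
Hypothesis HM2 : M < 2 / 3.
Hypothesis Hpos : forall i, 0 <= psz I i.

Lemma pmax_ge Y i : i \in Y -> psz I i <= pmaxY I Y.
Proof.
rewrite /pmaxY; elim: Y => [|a Y IH] //=; rewrite in_cons => /orP[/eqP->|Hi].
  by rewrite le_max lexx.
by rewrite le_max IH ?orbT.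
Qed.

Lemma pmax_le Y c : 0 <= c -> (forall i, i \in Y -> psz I i <= c) -> pmaxY I Y <= c.
Proof.
rewrite /pmaxY; elim: Y => [|a Y IH] //= Hc H.
rewrite ge_max H ?mem_head // IH // => i Hi; apply: H; by rewrite in_cons Hi orbT.
Qed.

Lemma totsz_take l k : totsz I (take k l) <= totsz I l.
Proof.
rewrite -{2}(cat_take_drop k l) /totsz big_cat /= lerDl; exact: sumr_ge0.
Qed.

Definition sY Y := sortY I Y.

Lemma perm_sY Y : perm_eq (sY Y) Y.
Proof. by rewrite /sY /sortY perm_sort. Qed.

Lemma totsz_sY Y : totsz I (sY Y) = totsz I Y.
Proof. by rewrite /totsz (perm_big _ (perm_sY Y)). Qed.

Lemma sumW_in Y k :
  totsz I (take k (sY Y)) <= \sum_(i <- Y | i \in take k (sY Y)) psz I i.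
Proof.
rewrite -(perm_big _ (perm_sY Y)) -{2}(cat_take_drop k (sY Y)) big_cat /=.
rewrite /totsz [X in X <= _]big_seq lerDl; exact: sumr_ge0.
Qed.

Lemma W_cases Y t :
  let W := shortest_prefix I (sY Y) t in
  t <= totsz I W \/ (W = sY Y /\ totsz I Y < t).
Proof.
rewrite /shortest_prefix; set s := sY Y; set P := (X in find X _).
case Hh: (has P (iota 0 (size s).+1)).
  left; have := nth_find 0%N Hh; rewrite (nth_iota 0 0); last by rewrite -[X in (_ < X)%N](size_iota 0 (size s).+1) -has_find.
  by rewrite add0n.
right; rewrite hasNfind ?Hh // size_iota take_oversize //; split => //.
move/negbT: Hh => /hasPn /(_ (size s)); rewrite mem_iota ltnS leqnn /= => /(_ isT).
by rewrite /P take_size totsz_sY ltNge.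
Qed.

Lemma W_mig Y (p : R) :
  0 <= p -> totsz I Y < M -> 2 - M < totsz I Y + p -> pmaxY I Y <= M * p ->
  totsz I (shortest_prefix I (sY Y) (p + totsz I Y - (2 - M))) <= M * p.
Proof.
move=> Hp Hy Hyp Hmax.
have hm1 := HM1; have hm2 := HM2.
have Mpos : 0 < M by apply: lt_le_trans HM1; lra.
have wley : forall k, totsz I (take k (sY Y)) <= totsz I Y.
  by move=> k; rewrite -(totsz_sY Y); apply: totsz_take.
rewrite /shortest_prefix; set s := sY Y; set t := (p + _ - _); set P := (X in find X _).
case Hh: (has P (iota 0 (size s).+1)); last first.
  rewrite hasNfind ?Hh // size_iota take_oversize //.
  move/negbT: Hh => /hasPn /(_ (size s)); rewrite mem_iota ltnS leqnn /= => /(_ isT).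
  rewrite /P take_size totsz_sY -ltNge /t => H.
  have {}H : totsz I Y < p + totsz I Y - (2 - M) by [].
  have Hp1 : 0 < p - 1 by lra.
  have := mulr_gt0 Mpos Hp1; nra.
set k := find P (iota 0 (size s).+1).
have Hk : (k < (size s).+1)%N by rewrite -[X in (_ < X)%N](size_iota 0 (size s).+1) -has_find.
have Hb : forall k1, (k1 < k)%N -> ~~ P k1.
  move=> k1 Hk1; have := before_find 0%N Hk1; rewrite (nth_iota 0 0) ?add0n => [->//|].
  exact: ltn_trans Hk1 Hk.
case Ek: k Hk Hb => [|k1] Hk Hb.
  rewrite take0 /totsz big_nil; nra.
have Hk1 : (k1 < size s)%N by [].
rewrite (take_nth 0%N Hk1) /totsz big_rcons /= -/(totsz I (take k1 s)).
set a := nth 0%N s k1.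
have Ha : a \in Y by rewrite -(perm_mem (perm_sY Y)) mem_nth.
have Hamax := pmax_ge Ha.
have HnP := Hb k1 (ltnSn _); rewrite /P -ltNge in HnP.
have Hw := wley k1.+1; rewrite (take_nth 0%N Hk1) /totsz big_rcons /= -/(totsz I (take k1 s)) in Hw.
case: (eqVneq k1 0%N) => [Ek1|Nk1].
  move: HnP Hw; rewrite Ek1 take0 /totsz big_nil add0r => HnP Hw; lra.
have Hs0 : (0 < size s)%N by apply: leq_ltn_trans Hk1.
have Hsort : psz I a <= psz I (nth 0%N s 0).
  have Hso : sorted (fun i k => psz I k <= psz I i) s.
    apply: sort_sorted => i j; exact: le_total.
  have tr : transitive (fun i k => psz I k <= psz I i).
    by move=> x y z Hxy Hyz; apply: le_trans Hyz Hxy.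
  have rf : reflexive (fun i k => psz I k <= psz I i) by move=> x /=.
  have := @sorted_leq_nth _ _ tr rf 0%N s Hso 0%N k1.
  by rewrite !inE Hs0 Hk1 => /(_ isT isT isT).
have H0 : psz I (nth 0%N s 0) <= totsz I (take k1 s).
  have := totsz_take (take k1 s) 1; rewrite take_takel ?lt0n // (take_nth 0%N Hs0) take0.
  by rewrite /totsz big_rcons big_nil /= add0r.
have Hy0 : 0 <= totsz I Y by apply: totsz_ge0.
have h1 : totsz I (take k1 s) < p + totsz I Y - (2 - M) by exact: HnP.
have h2 : totsz I (take k1 s) + psz I a <= totsz I Y by exact: Hw.
have h3 : psz I a <= totsz I (take k1 s) by apply: le_trans Hsort H0.
clear HnP Hw Hsort H0 Hmax Hamax.
case: (lerP 1 p) => Hp1.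
  have : 0 <= M * (p - 1) by apply: mulr_ge0; lra.
  lra.
have : 0 < (2 - M) * (1 - p) by apply: mulr_gt0; lra.
lra.
Qed.

End Step.

Section Step2.
Variable R : realFieldType.
Variable M : R.
Variable I : seq (job R).
Hypothesis HM1 : 1 / 2 <= M.
Hypothesis HM2 : M < 2 / 3.
Hypothesis Hpos : forall i, 0 <= psz I i.

Lemma sum_notin Y (W : seq nat) :
  \sum_(i <- Y | i \notin W) psz I i = totsz I Y - \sum_(i <- Y | i \in W) psz I i.
Proof.
rewrite /totsz (bigID (fun i => i \in W) xpredT) /=; ring.
Qed.

Lemma step5_y Y j (W : seq nat) :
  totsz I (j :: [seq i <- Y | i \notin W]) = psz I j + \sum_(i <- Y | i \notin W) psz I i.
Proof. by rewrite /totsz big_cons big_filter. Qed.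

Lemma step_mig Y j : totsz I (stepC M I j Y).2 <= M * psz I j.
Proof.
have hm1 := HM1; have hm2 := HM2; have p0 := Hpos j.
have Mpos : 0 < M by lra.
have nil0 : totsz I [::] <= M * psz I j.
  rewrite /totsz big_nil; apply: mulr_ge0; lra.
rewrite /stepC; case: ifP => H2 //=; case: ifP => H3 //=; case: ifP => H4 //=.
move/negbT: H2; rewrite negb_or -ltNge => /andP[_ H2].
move/negbT: H3; rewrite -ltNge => H3.
move/negbT: H4; rewrite -leNgt => H4.
by apply: W_mig.
Qed.

Lemma step_inv Y j : uniq Y -> (forall i, i \in Y -> (i < j)%N) ->
  uniq (stepC M I j Y).1 /\ (forall i, i \in (stepC M I j Y).1 -> (i < j.+1)%N).
Proof.
move=> HU HY.
have jY : j \notin Y by apply/negP => /HY; rewrite ltnn.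
have Hl : forall i, i \in Y -> (i < j.+1)%N by move=> i /HY /ltnW.
rewrite /stepC; case: ifP => H2 //=; case: ifP => H3 //=.
  split; first by rewrite jY.
  by move=> i; rewrite in_cons => /orP[/eqP->//|/Hl].
case: ifP => H4 //=; split.
  rewrite filter_uniq // andbT mem_filter negb_and jY orbT //.
move=> i; rewrite in_cons mem_filter => /orP[/eqP->//|/andP[_ /Hl]] //.
Qed.

Lemma step_bound Y j : psz I j <= 1 -> totsz I Y <= 2 - M ->
  totsz I (stepC M I j Y).1 <= 2 - M.
Proof.
have hm1 := HM1; have hm2 := HM2; have p0 := Hpos j.
move=> Hp1 Hy.
rewrite /stepC; case: ifP => H2 //=; case: ifP => H3 //=.
  by rewrite /totsz big_cons addrC; exact: H3.
case: ifP => H4 //=.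
rewrite step5_y sum_notin.
set t := (psz I j + totsz I Y - (2 - M)).
have := sumW_in Hpos Y (find (fun k => t <= totsz I (take k (sortY I Y)))
                          (iota 0 (size (sortY I Y)).+1)).
have := W_cases I Y t.
rewrite /shortest_prefix /sY /=.
set W := take _ _.
move=> [Ht|[-> Hlt]] Hin.
  have {}Ht : t <= totsz I W by exact: Ht.
  rewrite /t in Ht; lra.
rewrite totsz_sY in Hin.
have {}Hlt : totsz I Y < t by exact: Hlt.
lra.
Qed.

Lemma step_grow Y j : totsz I (stepC M I j Y).1 < M ->
  totsz I Y <= totsz I (stepC M I j Y).1 /\ {subset Y <= (stepC M I j Y).1}.
Proof.
have hm1 := HM1; have hm2 := HM2; have p0 := Hpos j.
rewrite /stepC; case: ifP => H2 /=.
  by move=> _; split; [exact: lexx|].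
case: ifP => H3 /=.
  move=> _; split; first by rewrite /totsz big_cons lerDr.
  by move=> i Hi; rewrite in_cons Hi orbT.
case: ifP => H4 /=.
  by move=> _; split; [exact: lexx|].
move/negbT: H2; rewrite negb_or -ltNge => /andP[_ H2].
move/negbT: H3; rewrite -ltNge => H3.
rewrite step5_y.
set z := \sum_(i <- Y | _) _.
have z0 : 0 <= z by apply: sumr_ge0.
have {}H2 : totsz I Y < M by exact: H2.
have {}H3 : 2 - M < totsz I Y + psz I j by exact: H3.
move=> H; have {}H : psz I j + z < M by exact: H.
lra.
Qed.

Lemma step_4 Y j : gos I j != 1%N -> totsz I (stepC M I j Y).1 < M ->
  j \notin (stepC M I j Y).1 ->
  2 - M < totsz I Y + psz I j /\ exists k, k \in Y /\ M * psz I j < psz I k.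
Proof.
have hm1 := HM1; have hm2 := HM2; have p0 := Hpos j.
move=> Hg.
rewrite /stepC (negbTE Hg) /=; case: ifP => H2 //=.
  move=> H; have {}H : totsz I Y < M by exact: H.
  have {}H2 : M <= totsz I Y by exact: H2.
  lra.
case: ifP => H3 //=.
  by rewrite mem_head.
case: ifP => H4 //=.
  move=> _ _; move/negbT: H3; rewrite -ltNge => H3; split; first by [].
  case Hh: (has (fun k => M * psz I j < psz I k) Y).
    by move/hasP: Hh => [k Hk Hlt]; exists k.
  move/negbT/hasPn: Hh => Hh.
  have : pmaxY I Y <= M * psz I j.
    apply: pmax_le; first by apply: mulr_ge0; lra.
    by move=> i /Hh; rewrite -leNgt.
  by rewrite leNgt H4.
move/negbT: H2; rewrite -ltNge => H2.
move/negbT: H3; rewrite -ltNge => H3.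
rewrite step5_y.
set z := \sum_(i <- Y | _) _.
have z0 : 0 <= z by apply: sumr_ge0.
have {}H2 : totsz I Y < M by exact: H2.
have {}H3 : 2 - M < totsz I Y + psz I j by exact: H3.
move=> H; have {}H : psz I j + z < M by exact: H.
lra.
Qed.

End Step2.

Lemma S_ext (R : realFieldType) (I : seq (job R)) n (P Q : pred nat) :
  P =1 Q -> S I n P = S I n Q.
Proof. by move=> H; rewrite /S; apply: eq_bigl. Qed.

Lemma S_mem (R : realFieldType) (I : seq (job R)) n (Y : seq nat) :
  uniq Y -> (forall i, i \in Y -> (i < n)%N) -> totsz I Y = S I n (fun i => i \in Y).
Proof.
move=> HU HY; rewrite /S -big_filter /totsz; apply: perm_big.
apply: uniq_perm => //; first by rewrite filter_uniq // iota_uniq.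
move=> i; rewrite mem_filter mem_iota add0n.
by case Hi: (i \in Y) => //=; rewrite (HY _ Hi).
Qed.

Section Dyn.
Variable R : realFieldType.
Variable M : R.
Variable I : seq (job R).
Hypothesis HM1 : 1 / 2 <= M.
Hypothesis HM2 : M < 2 / 3.
Hypothesis Hpos : forall i, 0 <= psz I i.

Notation Ys m := (Ystate M I m).

Lemma Y_inv m : uniq (Ys m) /\ forall i, i \in Ys m -> (i < m)%N.
Proof.
elim: m => [|m [HU HY]] //=; exact: step_inv.
Qed.

Lemma Y_bound (Hp1 : forall j, psz I j <= 1) m : totsz I (Ys m) <= 2 - M.
Proof.
have hm1 := HM1; have hm2 := HM2.
elim: m => [|m IH] /=; last exact: step_bound.
rewrite /totsz big_nil; lra.
Qed.

Lemma Y_persist i m : (i <= m)%N -> totsz I (Ys m) < M ->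
  totsz I (Ys i) <= totsz I (Ys m) /\ {subset Ys i <= Ys m}.
Proof.
elim: m => [|m IH].
  by rewrite leqn0 => /eqP-> _; split; [exact: lexx|].
rewrite leq_eqVlt => /orP[/eqP-> _|Him]; first by split; [exact: lexx|].
move=> H; have [G1 G2] := step_grow HM1 HM2 Hpos H.
have [I1 I2] := IH Him (le_lt_trans G1 H).
split; first exact: le_trans I1 G1.
by move=> x /I2 /G2.
Qed.

Lemma Y_step4 n i : (i < n)%N -> gos I i != 1%N -> i \notin Ys n -> totsz I (Ys n) < M ->
  2 - M < totsz I (Ys i) + psz I i /\ totsz I (Ys i) < M /\
  exists k, k \in Ys n /\ M * psz I i < psz I k.
Proof.
move=> Hi Hg HiY Hy.
have [P1 P2] := Y_persist (ltnW Hi) Hy.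
have [Q1 Q2] := Y_persist Hi Hy.
have H1 : totsz I (Ys i.+1) < M by apply: le_lt_trans Q1 Hy.
have H2 : i \notin Ys i.+1 by apply/negP => /Q2; apply/negP.
have [A [k [Hk Hlt]]] := step_4 HM1 HM2 Hpos Hg H1 H2.
split => //; split; first exact: le_lt_trans P1 Hy.
by exists k; split => //; apply: P2.
Qed.

End Dyn.

Lemma psz_out (R : realFieldType) (I : seq (job R)) i : (size I <= i)%N -> psz I i = 0.
Proof. by move=> H; rewrite /psz nth_default. Qed.

Lemma valid_pos (R : realFieldType) (I : seq (job R)) : valid_input I -> forall i, 0 <= psz I i.
Proof.
move=> HI i; case: (ltnP i (size I)) => Hi; last by rewrite psz_out.
have := allP HI _ (mem_nth (0, 1%N) Hi) => /andP[H _].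
by rewrite /psz ltW.
Qed.

Theorem mainTheorem10 (R : realFieldType) (M : R) :
  1 / 2 <= M -> M < 2 / 3 ->
  (* migration factor at most M, on every input *)
  (forall (I : seq (job R)), valid_input I ->
     forall j, (j < size I)%N -> totsz I (migrated M I j) <= M * psz I j) /\
  (* makespan at most 2 - M when the optimal makespan is 1 *)
  (forall (I : seq (job R)), valid_input I -> opt_makespan_is I 1 ->
     makespan_C M I <= 2 - M).
Proof.
move=> HM1 HM2; split.
  move=> I HI j _; exact: (step_mig HM1 HM2 (valid_pos HI)).
move=> I HI [[a [Ha Hopt]] _].
have Hpos := valid_pos HI.
set n := size I.
have O1 : S I n (fun i => ~~ a i) <= 1.
  by rewrite /S -totsz_filter -Hopt /sched_makespan le_max lexx.
have O2 : S I n (fun i => a i) <= 1.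
  by rewrite /S -totsz_filter -Hopt /sched_makespan le_max lexx orbT.
have Hp1 : forall j, psz I j <= 1.
  move=> j; case: (ltnP j n) => Hj; last by rewrite psz_out.
  case Haj: (a j).
    by apply: le_trans O2; apply: (S_one Hpos) => //.
  by apply: le_trans O1; apply: (S_one Hpos) => //; rewrite Haj.
have hm1 := HM1; have hm2 := HM2.
set Y := Ystate M I n.
have [HU HY] := Y_inv M I n.
rewrite /makespan_C /loads_C /= -/n -/Y ge_max; apply/andP; split; last first.
  exact: Y_bound.
rewrite totsz_filter -/(S I n (fun i => i \notin Y)).
case: (lerP M (totsz I Y)) => Hy.
  have HT : S I n (fun i => i \notin Y) + totsz I Y = S I n (fun i => ~~ a i) + S I n (fun i => a i).
    rewrite (S_mem I HU HY) -!S_disj; first by apply: S_ext => i /=; case: (i \in Y); case: (a i).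
    - by move=> i /= ->.
    - by move=> i /= ->.
  lra.
case Hh: (has (fun i => (i \notin Y) && a i) (iota 0 n)); last first.
  move/negbT/hasPn: Hh => Hh.
  have : S I n (fun i => i \notin Y) <= S I n (fun i => ~~ a i).
    apply: (S_mono Hpos) => i Hi HiY; have := Hh i; rewrite mem_iota add0n Hi /= HiY /=.
    by move=> /(_ isT).
  lra.
move/hasP: Hh => [i]; rewrite mem_iota add0n => Hi /andP[HiY Hai].
have gosi : forall i, (i < n)%N -> a i -> gos I i != 1%N.
  by move=> i' Hi' Ha'; apply/eqP => /(Ha _ Hi'); rewrite Ha'.
have [A1 [A2 [k [Hk Hpk]]]] := Y_step4 HM1 HM2 Hpos Hi (gosi _ Hi Hai) HiY Hy.
have Hy0 : 0 <= totsz I (Ystate M I i) by apply: totsz_ge0.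
have Hpi : 2 - 2 * M < psz I i by lra.
have Hkn : (k < n)%N by apply: HY.
have Hki : k != i by apply/eqP => Eki; move: HiY; rewrite -Eki Hk.
have Hak : a k = false.
  apply/negP => Hak.
  have := S_two Hpos Hkn Hi Hki Hak Hai.
  have := Hp1 i.
  have : 0 <= M * (psz I i - (2 - 2 * M)) by apply: mulr_ge0; lra.
  nra.
have Huniq : forall i', (i' < n)%N -> (i' \notin Y) && a i' -> i' == i.
  move=> i' Hi' /andP[Hi'Y Hai']; apply/negPn/negP => Hne.
  have [B1 [B2 _]] := Y_step4 HM1 HM2 Hpos Hi' (gosi _ Hi' Hai') Hi'Y Hy.
  have Hy0' : 0 <= totsz I (Ystate M I i') by apply: totsz_ge0.
  have := S_two Hpos Hi' Hi Hne Hai' Hai.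
  lra.
have E : S I n (fun i => i \notin Y) =
         S I n (fun i => (i \notin Y) && ~~ a i) + S I n (fun i => (i \notin Y) && a i).
  rewrite -S_disj; first by apply: S_ext => x /=; case: (x \in Y); case: (a x).
  by move=> x /= /andP[-> ->].
have E2 : S I n (fun i => (i \notin Y) && a i) <= psz I i.
  rewrite -(S_pred1 I Hi); apply: (S_mono Hpos) => x Hx H; exact: Huniq.
have E3 : S I n (fun i => (i \notin Y) && ~~ a i) + psz I k <= 1.
  rewrite -(S_pred1 I Hkn) -S_disj.
    apply: le_trans O1; apply: (S_mono Hpos) => x _ /orP[/andP[_ ->]//|/eqP->].
    by rewrite Hak.
  by move=> x /= /andP[Hx _]; apply/eqP => Exk; move: Hx; rewrite Exk Hk.
have Hpi1 := Hp1 i.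
have : 0 <= (1 - M) * (1 - psz I i) by apply: mulr_ge0; lra.
lra.
Qed.
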